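(* Let $q\ge4$ be even and let $B(n,m)$ be the number of $m$-RLL strings in $\Sigma_q^n$. If $m\ge\lceil\log_{q/2}n\rceil+1$, then $B(n,m)\ge q^n-2q^{n-1}\ge q^n/2$.
   Context: $\Sigma_q=\{0,\dots,q-1\}$, $\boldsymbol{x}_{[a,b]}=x_a\cdots x_b$. The complement on $\Sigma_q$ is $\overline{a}=a+1$ if $a$ is even and $\overline{a}=a-1$ if $a$ is odd (so $\{a,\overline a\}=\{2\lfloor a/2\rfloor,2\lfloor a/2\rfloor+1\}$). In $\boldsymbol{x}\in\Sigma_q^n$, a substring $\boldsymbol{x}_{[i,j]}$ ($i\le j$) is a run if all its entries lie in $\{x_i,\overline{x_i}\}$ and it is maximal, i.e. $x_{i-1}\notin\{x_i,\overline{x_i}\}$ when $i>1$ and $x_{j+1}\notin\{x_i,\overline{x_i}\}$ when $j<n$. A string is $m$-runlength-limited ($m$-RLL) if each of its runs has length at most $m$. *)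

(* Defs.v *)
From mathcomp Require Import all_boot all_order all_algebra.
Set Implicit Arguments. Unset Strict Implicit. Unset Printing Implicit Defensive.

(* Symbols of Sigma_q are 'I_q; strings in Sigma_q^n are n.-tuple 'I_q.
   Positions are 0-based: x_k (paper, 1-based) is [seq val a | a <- x]`_(k-1). *)

Definition sym (q n : nat) (x : n.-tuple 'I_q) (k : nat) : nat :=
  nth 0 [seq val a | a <- x] k.

Definition compl (a : nat) : nat := if odd a then a.-1 else a.+1.

Definition in_pair (a b : nat) : bool := (b == a) || (b == compl a).

Definition is_run (q n : nat) (x : n.-tuple 'I_q) (i j : nat) : bool :=
  [&& i <= j, j < n,
      all (fun k => in_pair (sym x i) (sym x k)) (iota i (j - i + 1)),
      (i == 0) || ~~ in_pair (sym x i) (sym x i.-1) &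
      (j.+1 == n) || ~~ in_pair (sym x i) (sym x j.+1)].

Definition rll (q n m : nat) (x : n.-tuple 'I_q) : bool :=
  [forall i : 'I_n, forall j : 'I_n, is_run x i j ==> (j - i + 1 <= m)].

Definition B (q n m : nat) : nat := #|[set x : n.-tuple 'I_q | rll m x]|.

(* Main.v *)
Require Import Defs.
From mathcomp Require Import all_boot all_order all_algebra zify.

Lemma symE q n (x : n.-tuple 'I_q) (k : 'I_n) : sym x k = val (tnth x k).
Proof.
rewrite /sym (nth_map (tnth x k)) ?size_tuple // -tnth_nth //.
Qed.

Lemma card_tuple_ffun q n (P : n.-tuple 'I_q -> bool) :
  #|[set x : n.-tuple 'I_q | P x]| =
  #|[set f : {ffun 'I_n -> 'I_q} | P (tuple_of_finfun f)]|.
Proof.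
rewrite -(card_imset _ (can_inj (@tuple_of_finfunK _ _))); apply: eq_card => x; rewrite inE; apply/idP/imsetP => [Px|].
  by exists (finfun_of_tuple x); rewrite ?inE finfun_of_tupleK.
by case=> f; rewrite inE => Pf ->.
Qed.

Lemma card_pair q (a : 'I_q) : #|[pred b : 'I_q | in_pair a b]| <= 2.
Proof.
have h1 : #|[pred b : 'I_q | val b == compl a]| <= 1.
  apply/card_le1P => y /= /eqP Hy z; rewrite !inE /=; apply/eqP/eqP => [Hz|->//].
  by apply: val_inj; rewrite /= Hz.
apply: leq_trans (_ : #|[predU pred1 a & [pred b : 'I_q | val b == compl a]]| <= _).
  apply: subset_leq_card; apply/subsetP => b; rewrite !inE /in_pair.
  by case/orP => [/eqP->|->]; rewrite ?eqxx ?orbT.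
have := cardUI (pred1 a) [pred b : 'I_q | val b == compl a]; rewrite card1.
move=> H; apply: leq_trans (leq_add (leqnn 1) h1); by rewrite -H leq_addr.
Qed.

Definition g (q m i k : nat) := if k == i then 1 else if i < k <= i + m then 2 else q.

Lemma prod_g q n m i : i + m < n -> \prod_(k < n) g q m i k = 2 ^ m * q ^ (n - m - 1).
Proof.
move=> h; rewrite -(big_mkord xpredT (g q m i)).
have e1 : \prod_(0 <= k < i) g q m i k = q ^ i.
  have -> : q ^ i = q ^ (i - 0) by rewrite subn0.
  rewrite -prod_nat_const_nat; apply: eq_big_nat => k hk.
  rewrite /g; have -> : (k==i)=false by lia.
  by have -> : (i < k <= i+m) = false by lia.
have e2 : \prod_(i.+1 <= k < i.+1 + m) g q m i k = 2 ^ m.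
  have -> : 2 ^ m = 2 ^ (i.+1 + m - i.+1) by rewrite addKn.
  rewrite -prod_nat_const_nat; apply: eq_big_nat => k hk.
  rewrite /g; have -> : (k==i)=false by lia.
  by have -> : (i < k <= i+m) = true by lia.
have e3 : \prod_(i.+1 + m <= k < n) g q m i k = q ^ (n - (i.+1 + m)).
  rewrite -prod_nat_const_nat; apply: eq_big_nat => k hk.
  rewrite /g; have -> : (k==i)=false by lia.
  by have -> : (i < k <= i+m) = false by lia.
rewrite (big_cat_nat _ (n:=i)) //=; last lia.
rewrite (big_cat_nat _ (m:=i) (n:=i.+1)) //=; last lia.
rewrite (big_cat_nat _ (m:=i.+1) (n:=i.+1 + m)) //=; last lia.
rewrite big_nat1 /g eqxx -/(g q m i) e1 e2 e3 mul1n mulnCA -expnD.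
congr (_ * q ^ _); lia.
Qed.

Definition F q n m (i : nat) (a : 'I_q) (k : 'I_n) : pred 'I_q :=
  fun b => if val k == i then b == a else if i < k <= i + m then in_pair a b else true.

Lemma card_fam q n m i (a : 'I_q) : i + m < n ->
  #|[set f : {ffun 'I_n -> 'I_q} | f \in family (@F q n m i a)]| <= 2 ^ m * q ^ (n - m - 1).
Proof.
move=> h; rewrite -(@prod_g q n m i) // cardsE card_family foldrE big_image /=.
apply: leq_prod => k _; rewrite /F /g.
case: eqP => _.
  by rewrite (eq_card (B := pred1 a)) ?card1.
case: ifP => _; first exact: card_pair.
by rewrite -[q in _ <= q]card_ord max_card.
Qed.

Lemma bad q n m (x : n.-tuple 'I_q) : ~~ rll m x ->
  exists i : 'I_(n - m), exists a : 'I_q, finfun_of_tuple x \in family (@F q n m i a).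
Proof.
move/forallPn => [i] /forallPn [j]; rewrite negb_imply => /andP [hr hm].
move: hr => /and5P [hij hjn hall _ _].
have him : i < n - m by lia.
exists (Ordinal him), (tnth x i); apply/familyP => k; rewrite /F ffunE /=.
case: eqP => [hk|hk].
  have -> : k = i by apply: val_inj.
  by rewrite unfold_in.
rewrite unfold_in; case: ifP => // hk2.
have := allP hall k; rewrite mem_iota !symE; apply; lia.
Qed.

Lemma union_le (T I J : finType) (S : {set T}) (W : I -> J -> T -> bool) :
  (forall x, x \in S -> exists i j, W i j x) ->
  #|S| <= \sum_i \sum_j #|[set x | W i j x]|.
Proof.
move=> hS; rewrite -sum1_card big_mkcond /=.
have -> : \sum_i \sum_j #|[set x | W i j x]| = \sum_x \sum_i \sum_j (W i j x : nat).
  symmetry; rewrite exchange_big /=; apply: eq_bigr => i _.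
  rewrite exchange_big /=; apply: eq_bigr => j _.
  rewrite -sum1_card [RHS]big_mkcond; apply: eq_bigr => x _; rewrite inE.
  by case: (W i j x).
apply: leq_sum => x _; case: ifP => // /hS [i [j hW]].
by rewrite (bigD1 i) //= (bigD1 j) //= hW -addnA leq_addr.
Qed.

Lemma bad_bound q n m :
  #|[set x : n.-tuple 'I_q | ~~ rll m x]| <= (n - m) * (q * (2 ^ m * q ^ (n - m - 1))).
Proof.
have hW : forall (i : 'I_(n-m)) (a : 'I_q),
    #|[set x : n.-tuple 'I_q | finfun_of_tuple x \in family (@F q n m i a)]|
      <= 2 ^ m * q ^ (n - m - 1).
  move=> i a; rewrite card_tuple_ffun.
  have -> : #|[set f | finfun_of_tuple (tuple_of_finfun f) \in family (@F q n m i a)]|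
       = #|[set f : {ffun 'I_n -> 'I_q} | f \in family (@F q n m i a)]|.
    by apply: eq_card => f; rewrite !inE tuple_of_finfunK.
  apply: card_fam; have := ltn_ord i; lia.
apply: leq_trans (@union_le _ _ _ _ (fun (i : 'I_(n - m)) (a : 'I_q) x =>
   finfun_of_tuple x \in family (@F q n m i a)) _) _.
  by move=> x; rewrite inE => /bad.
rewrite -[n - m in X in _ <= X]card_ord -[q in _ * (q * _)]card_ord -!sum_nat_const.
apply: leq_sum => i _; apply: leq_sum => a _; rewrite card_ord; exact: hW.
Qed.

Lemma arith q n m : 4 <= q -> ~~ odd q -> 1 <= n -> up_log q./2 n + 1 <= m ->
  (n - m) * (q * (2 ^ m * q ^ (n - m - 1))) <= 2 * q ^ n.-1.
Proof.
move=> hq hodd hn hm.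
have hqp : q = 2 * q./2 by have := odd_double_half q; rewrite (negbTE hodd) add0n -mul2n.
set p := q./2 in hqp hm *.
have hp : 1 < p by lia.
have hnp : n <= p ^ m.-1.
  apply: leq_trans (up_logP n hp) _; rewrite leq_exp2l //; lia.
case: (leqP n m) => hnm; first by have -> : n - m = 0 by lia.
have [m' em] : exists m', m = m'.+1 by exists m.-1; lia.
have [r er] : exists r, n = m'.+1 + r.+1 by exists (n - m'.+2); lia.
subst m n; rewrite /= in hnp.
have -> : m'.+1 + r.+1 - m'.+1 - 1 = r by lia.
have -> : (m'.+1 + r.+1).-1 = m'.+1 + r by lia.
have -> : m'.+1 + r.+1 - m'.+1 = r.+1 by lia.
have e : q ^ m'.+1 = 2 ^ m'.+1 * (p * p ^ m') by rewrite hqp expnMn [p ^ _.+1]expnS.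
rewrite expnD e.
have hr : r.+1 <= p ^ m' by lia.
move: hr; generalize (p ^ m') (2 ^ m'.+1) (q ^ r) => D A C hr.
rewrite hqp.
have -> : 2 * (A * (p * D) * C) = D * (2 * p * (A * C)) by nia.
by rewrite leq_mul2r hr orbT.
Qed.

Import GRing.Theory Num.Theory.
From mathcomp Require Import lra.
Local Open Scope ring_scope.

Theorem lemma11 (q n m : nat) :
  (4 <= q)%N -> ~~ odd q -> (1 <= n)%N ->
  (up_log q./2 n + 1 <= m)%N ->
  (q%:R ^+ n - 2 * q%:R ^+ n.-1 <= (B q n m)%:R :> rat) /\
  ((q%:R ^+ n) / 2 <= q%:R ^+ n - 2 * q%:R ^+ n.-1 :> rat).
Proof.
move=> hq hodd hn hm.
have hS := leq_trans (bad_bound q n m) (@arith q n m hq hodd hn hm).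
have hB : (B q n m + #|[set x : n.-tuple 'I_q | ~~ rll m x]| = q ^ n)%N.
  rewrite /B -[q in (_ = q ^ n)%N](card_ord q) -card_tuple.
  have <- : ~: [set x : n.-tuple 'I_q | rll m x] = [set x | ~~ rll m x].
    by apply/setP => x; rewrite !inE.
  exact: cardsC.
have hq4 : (4 : rat) <= q%:R by rewrite (ler_nat rat 4 q).
case: n hn hm hS hB => [//|n'] _ hm hS hB /=.
split.
  have -> : B q n'.+1 m = (q ^ n'.+1 - #|[set x : n'.+1.-tuple 'I_q | ~~ rll m x]|)%N.
    by rewrite -hB addnK.
  rewrite natrB; last by rewrite -hB leq_addl.
  have : (#|[set x : n'.+1.-tuple 'I_q | ~~ rll m x]|%:R : rat) <= (2 * q ^ n')%:R.
    by rewrite ler_nat.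
  rewrite natrM !natrX; lra.
rewrite exprS.
have h0 : (0 : rat) <= q%:R ^+ n' by apply: exprn_ge0; rewrite ler0n.
have h1 : (0 : rat) <= q%:R - 4 by lra.
have := mulr_ge0 h1 h0.
lra.
Qed.
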